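(* Let $\alpha\ge1$, and run the Dual Metric Algorithm (described in the context) on a dual-metric-loss instance, using in Phase 1 any $\alpha$-approximate most cohesive clusters, with growth factor $c=\frac{3\alpha+\sqrt{\alpha(\alpha+8)}}{4\alpha}$, any processing order of agents in Phase 2 and any tie-breaking. Then the output clustering is in the $\frac{1}{2}\left(\alpha+\sqrt{\alpha(\alpha+8)}+2\right)$-core with respect to the dual metric loss.
   Context: Instance: finite nonempty set $\mathcal{N}$ of $n$ agents, finite nonempty set $\mathcal{M}$ of feasible centers, positive integer $k$, pseudometric $d^m$ on $\mathcal{N}$, pseudometric $d^c$ on $\mathcal{N}\cup\mathcal{M}$. Dual metric loss: $\ell_i(C,x)=\max_{j\in C}d^m(i,j)+d^c(i,x)$ for $i\in C\subseteq\mathcal{N}$, $x\in\mathcal{M}$. A clustering is $\mathcal{X}=\{(C_1,x_1),\dots,(C_k,x_k)\}$ with $C_t$ pairwise disjoint (some possibly empty), union $\mathcal{N}$, $x_t\in\mathcal{M}$; $\ell_i(\mathcal{X})=\ell_i(C_t,x_t)$ where $i\in C_t$. For $\beta\ge1$, $\mathcal{X}$ is in the $\beta$-core if there is no $S\subseteq\mathcal{N}$ with $|S|\ge n/k$ and $y\in\mathcal{M}$ with $\beta\,\ell_i(S,y)<\ell_i(\mathcal{X})$ for all $i\in S$. $\alpha$-approximate most cohesive cluster ($\alpha$-MCC) from an agent set $A\subseteq\mathcal{N}$ (threshold $n/k$): a pair $(C,x)$ with $C\subseteq A$, $|C|\ge\min(|A|,n/k)$, $x\in\mathcal{M}$, such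 that $\max_{i\in C}\ell_i(C,x)\le\alpha\max_{i\in S}\ell_i(S,y)$ for every $S\subseteq A$ with $|S|\ge\min(|A|,n/k)$ and every $y\in\mathcal{M}$. Dual Metric Algorithm (parameters $c\ge1$, $\alpha$). Phase 1: set $A\leftarrow\mathcal{N}$, $t\leftarrow1$; while $A\ne\emptyset$: choose an $\alpha$-MCC $(\hat C_t,x_t)$ from $A$, set $r_t=\max_{i\in\hat C_t}\ell_i(\hat C_t,x_t)$, $A\leftarrow A\setminus\hat C_t$, $t\leftarrow t+1$. Let $T$ be the set of indices created (at most $k$), and for $i\in\mathcal{N}$ let $\hat t(i)$ be the index with $i\in\hat C_{\hat t(i)}$. Phase 2: set $C_t\leftarrow\hat C_t$ for $t\in T$; for each agent $i$ in turn: let $t=\hat t(i)$; let $V_i=\{t'\in T:\ d^c(j,x_{t'})+d^m(j,i)\le c\,r_{t'}\text{ for all } j\in\hat C_{t'}\}$; define $\Phi(i,t')=d^c(i,x_{t'})+c\,r_{t'}+\min_{j\in\hat C_{t'}}\big(d^m(i,j)-d^c(j,x_{t'})\big)$; pick $t^*\in\arg\min_{t'\in V_i}\Phi(i,t')$; if $\Phi(i,t^* )<c\,r_t$, remove $i$ from $C_t$ and add it to $C_{t^*}$. Output $\{(C_t,x_t):t\in T\}$, padded with empty clusters (arbitrary centers) to $k$ clusters. *)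

(* Defs.v *)
From HB Require Import structures.
From mathcomp Require Import all_boot all_order all_algebra.
Set Implicit Arguments. Unset Strict Implicit. Unset Printing Implicit Defensive.
Import Order.TTheory GRing.Theory Num.Theory.
Local Open Scope ring_scope.

Definition is_pseudometric (R : numDomainType) (X : Type) (d : X -> X -> R) : Prop :=
  (forall x, d x x = 0) /\ (forall x y, d x y = d y x) /\
  (forall x y z, d x z <= d x y + d y z).

Definition minR (R : realDomainType) (l : seq R) : R :=
  match l with [::] => 0 | a :: l' => foldr Num.min a l' end.

Section DualMetric.
Variables (R : rcfType) (N M : finType) (k : nat).
(* dm = d^m on agents; dc = d^c on N ∪ M, represented as the sum type N + M *)
Variables (dm : N -> N -> R) (dc : N + M -> N + M -> R).

Definition thr : R := #|N|%:R / k%:R.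

Definition loss (C : {set N}) (x : M) (i : N) : R :=
  \big[Num.max/0]_(j in C) dm i j + dc (inl i) (inr x).

Definition cost (C : {set N}) (x : M) : R :=
  \big[Num.max/0]_(i in C) loss C x i.

Definition is_MCC (alpha : R) (A : {set N}) (C : {set N}) (x : M) : Prop :=
  [/\ C \subset A, Num.min (#|A|%:R) thr <= #|C|%:R &
      forall (S : {set N}) (y : M), S \subset A -> Num.min (#|A|%:R) thr <= #|S|%:R ->
        cost C x <= alpha * cost S y].

(* Phase 1: s lists the pairs (hat C_t, x_t) in order of creation, starting from A *)
Fixpoint phase1_run (alpha : R) (A : {set N}) (s : seq ({set N} * M)) : Prop :=
  match s with
  | [::] => A = set0
  | p :: s' => A != set0 /\ is_MCC alpha A p.1 p.2 /\ phase1_run alpha (A :\: p.1) s'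
  end.

Section Phase2.
Variables (c : R) (s : seq ({set N} * M)).
Local Notation T := 'I_(size s).

Definition Chat (t : T) : {set N} := (tnth (in_tuple s) t).1.
Definition xc (t : T) : M := (tnth (in_tuple s) t).2.
Definition rad (t : T) : R := cost (Chat t) (xc t).

Definition Vset (i : N) : {set T} :=
  [set t' : T | [forall j in Chat t', dc (inl j) (inr (xc t')) + dm j i <= c * rad t']].

Definition Phi (i : N) (t' : T) : R :=
  dc (inl i) (inr (xc t')) + c * rad t' +
  minR [seq dm i j - dc (inl j) (inr (xc t')) | j <- enum (Chat t')].

(* pick : N -> T is a tie-breaking rule choosing an argmin of Phi(i,.) over V_i *)
Definition valid_pick (pick : N -> T) : Prop :=
  forall i, Vset i != set0 ->
    pick i \in Vset i /\ (forall t', t' \in Vset i -> Phi i (pick i) <= Phi i t').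

(* processing of agent i in Phase 2; g is the current assignment agent -> cluster index;
   that = hat t *)
Definition step2 (that pick : N -> T) (g : N -> T) (i : N) : N -> T :=
  if (Vset i != set0) && (Phi i (pick i) < c * rad (that i))
  then (fun j => if j == i then pick i else g j) else g.

Definition final_assign (that pick : N -> T) (ord : seq N) : N -> T :=
  foldl (step2 that pick) that ord.

Definition out_cluster (that pick : N -> T) (ord : seq N) (t : T) : {set N} :=
  [set i | final_assign that pick ord i == t].

Definition out_loss (that pick : N -> T) (ord : seq N) (i : N) : R :=
  let t := final_assign that pick ord i in
  loss (out_cluster that pick ord t) (xc t) i.
End Phase2.

Definition in_core (beta : R) (lossX : N -> R) : Prop :=
  ~ exists (S : {set N}) (y : M),
      thr <= #|S|%:R /\ forall i, i \in S -> beta * loss S y i < lossX i.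
End DualMetric.

(* Main.v *)
Require Import Defs.
From HB Require Import structures.
From mathcomp Require Import all_boot all_order all_algebra.
From mathcomp Require Import lra ring.
Import Order.TTheory GRing.Theory Num.Theory.
Local Open Scope ring_scope.

Lemma foldr_min_le (R : realDomainType) (a : R) l z :
  z \in a :: l -> foldr Num.min a l <= z.
Proof.
elim: l => [|x l IH] /=; first by rewrite inE => /eqP ->.
rewrite !inE ge_min => /or3P [/eqP za|/eqP ->|zl].
- by rewrite IH ?orbT // inE za eqxx.
- by rewrite lexx.
- by rewrite IH ?orbT // inE zl orbT.
Qed.

Lemma foldr_min_mem (R : realDomainType) (a : R) l :
  foldr Num.min a l \in a :: l.
Proof.
elim: l => [|x l IH] /=; first by rewrite inE.
case: leP => h.
- by rewrite !inE eqxx orbT.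
- move: IH; rewrite !inE => /orP [->|->] //.
  by rewrite !orbT.
Qed.

Lemma minR_le (R : realDomainType) (l : seq R) z : z \in l -> minR l <= z.
Proof. by case: l => [//|a l] /=; exact: foldr_min_le. Qed.
Arguments minR_le {R l z}.

Lemma minR_mem (R : realDomainType) (l : seq R) : l != [::] -> minR l \in l.
Proof. by case: l => [//|a l] _ /=; exact: foldr_min_mem. Qed.
Arguments minR_mem {R l}.

Lemma p1_sub (R : rcfType) (N M : finType) k dm dc (alpha : R) (A : {set N})
  (s : seq ({set N} * M)) :
  phase1_run k dm dc alpha A s -> forall d t, (t < size s)%N -> (nth d s t).1 \subset A.
Proof.
elim: s A => [//|p s IH] A /= [_ [[sub _ _] hr]] d [|t] ht //=.
exact: subset_trans (IH _ hr d t ht) (subsetDl _ _).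
Qed.
Arguments p1_sub {R N M k dm dc alpha A s}.

Lemma p1_disj (R : rcfType) (N M : finType) k dm dc (alpha : R) (A : {set N})
  (s : seq ({set N} * M)) :
  phase1_run k dm dc alpha A s -> forall d t t' i, (t' < t)%N -> (t < size s)%N ->
  i \in (nth d s t).1 -> i \notin (nth d s t').1.
Proof.
elim: s A => [//|p s IH] A /= [_ [_ hr]] d [|t] [|t'] i //= ht' ht hi.
- have := subsetP (p1_sub hr d _ ht) i hi; rewrite inE => /andP [] //.
- exact: IH hr d t t' i ht' ht hi.
Qed.
Arguments p1_disj {R N M k dm dc alpha A s}.

Lemma p1_ne (R : rcfType) (N M : finType) k dm dc (alpha : R) (A : {set N})
  (s : seq ({set N} * M)) : 0 < thr R N k ->
  phase1_run k dm dc alpha A s -> forall d t, (t < size s)%N -> (nth d s t).1 != set0.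
Proof.
move=> hthr; elim: s A => [//|p s IH] A /= [hA [[_ hc _] hr]] d [|t] ht /=.
- rewrite -card_gt0 -(ltr0n R); apply: lt_le_trans hc.
  by rewrite lt_min hthr andbT ltr0n card_gt0.
- exact: IH hr d t ht.
Qed.
Arguments p1_ne {R N M k dm dc alpha A s}.

Lemma p1_cost (R : rcfType) (N M : finType) k dm dc (alpha : R) (A : {set N})
  (s : seq ({set N} * M)) :
  phase1_run k dm dc alpha A s -> forall d t (S : {set N}) y, (t < size s)%N ->
  S \subset A -> thr R N k <= #|S|%:R ->
  (forall i, i \in S -> forall t', (t' < t)%N -> i \notin (nth d s t').1) ->
  cost dm dc (nth d s t).1 (nth d s t).2 <= alpha * cost dm dc S y.
Proof.
elim: s A => [//|p s IH] A /= [_ [[_ _ hm] hr]] d [|t] S y ht hSA hS hdis /=.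
- by apply: hm => //; rewrite ge_min hS orbT.
- apply: (IH _ hr d t S y ht) => //.
  + apply/subsetP => i iS; rewrite inE (subsetP hSA) // andbT.
    exact: (hdis i iS 0%N).
  + move=> i iS t' lt; exact: (hdis i iS t'.+1).
Qed.
Arguments p1_cost {R N M k dm dc alpha A s}.

Lemma fa_eq (R : rcfType) (N M : finType) dm dc (c : R) (s : seq ({set N} * M))
  (that pick : N -> 'I_(size s)) (ord : seq N) g i :
  foldl (step2 dm dc c that pick) g ord i =
  if (i \in ord) && ((Vset dm dc c s i != set0) &&
      (Phi dm dc c i (pick i) < c * Defs.rad dm dc (that i)))
  then pick i else g i.
Proof.
elim: ord g => [|x ord IH] g //=.
rewrite IH inE /step2.
case: (boolP ((Vset dm dc c s x != set0) &&
   (Phi dm dc c x (pick x) < c * Defs.rad dm dc (that x)))) => hx.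
- case: (eqVneq i x) => [->|ne] /=.
  + by rewrite hx; case: ifP.
  + by [].
- case: (eqVneq i x) => [->|ne] /=.
  + by rewrite (negbTE hx) !andbF.
  + by [].
Qed.

Lemma arith_E (R : rcfType) (al s b c : R) : 1 <= al -> 0 <= s ->
  4*al*c = 3*al+s -> 2*b = al+s+2 -> s*s = al*al+8*al ->
  [/\ b*(c-1) = c, c*al*(1+b) = b*(b-1), 1 <= c & 0 < b].
Proof.
move=> h1 h2 hc hb hs.
have hsa : al <= s by nra.
have hc1 : 0 <= 4*al*(c-1) by lra.
split; [nra|nra| |lra].
have h4 : 0 < 4*al by lra.
rewrite pmulr_rge0 // in hc1; lra.
Qed.

Lemma arith_1 (R : rcfType) (b c a r : R) : 0 < b -> b*(c-1) = c ->
  b * a < c * r -> a <= (c-1) * r.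
Proof. move=> hb E h; rewrite -E -mulrA ltr_pM2l // in h; exact: ltW. Qed.

Lemma arith_2 (R : rcfType) (al b c a r L : R) : 0 < b -> 1 <= c ->
  c*al*(1+b) = b*(b-1) ->
  b * a < c * r -> b * L < L + a + c * r -> r <= al * L -> False.
Proof.
move=> hb hc E h1 h2 h3.
have hA : b*(b*L) < b*(L + a + c*r) by rewrite ltr_pM2l.
have hB : c*(1+b)*r <= c*(1+b)*(al*L).
  by apply: ler_wpM2l => //; nra.
have hE : c*al*(1+b)*L = b*(b-1)*L by rewrite E.
nra.
Qed.

Theorem mainTheorem5 (R : rcfType) (N M : finType) (k : nat)
  (dm : N -> N -> R) (dc : N + M -> N + M -> R) (alpha : R)
  (s : seq ({set N} * M)) (that pick : N -> 'I_(size s)) (ord : seq N) :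
  (0 < k)%N -> (0 < #|N|)%N -> (0 < #|M|)%N ->
  is_pseudometric dm -> is_pseudometric dc -> 1 <= alpha ->
  phase1_run k dm dc alpha [set: N] s ->
  (forall i, i \in Chat (s := s) (that i)) ->
  let c := (3 * alpha + Num.sqrt (alpha * (alpha + 8))) / (4 * alpha) in
  valid_pick dm dc c pick ->
  perm_eq ord (enum N) ->
  in_core k dm dc ((alpha + Num.sqrt (alpha * (alpha + 8)) + 2) / 2)
    (out_loss dm dc c that pick ord).
Proof.
move=> k0 N0 M0 [dm0 [dmS dmT]] [dc0 [dcS dcT]] al1 hrun hthat c hpick hord.
set sq := Num.sqrt (alpha * (alpha + 8)).
set b := (alpha + sq + 2) / 2.
have dmge0 : forall x y, 0 <= dm x y.
  by move=> x y; have := dmT x y x; rewrite dm0 (dmS y x); lra.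
have dcge0 : forall x y, 0 <= dc x y.
  by move=> x y; have := dcT x y x; rewrite dc0 (dcS y x); lra.
have sq0 : 0 <= sq by rewrite sqrtr_ge0.
have sqsq : sq * sq = alpha * alpha + 8 * alpha.
  by rewrite -expr2 sqr_sqrtr; [ring | nra].
have hc : 4 * alpha * c = 3 * alpha + sq.
  by rewrite /c mulrC divfK //; lra.
have hb : 2 * b = alpha + sq + 2 by rewrite /b mulrC divfK //; lra.
have [E1 E2 c1 b0] := @arith_E R alpha sq b c al1 sq0 hc hb sqsq.
have thr0 : 0 < thr R N k by rewrite /thr divr_gt0 // ltr0n.
case/card_gt0P: M0 => x0 _.
pose d : {set N} * M := (set0, x0).
have hC : forall t : 'I_(size s), Chat t = (nth d s t).1.
  by move=> t; rewrite /Chat (tnth_nth d).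
have hX : forall t : 'I_(size s), xc t = (nth d s t).2.
  by move=> t; rewrite /xc (tnth_nth d).
pose mv i := (Vset dm dc c s i != set0) &&
  (Phi dm dc c i (pick i) < c * Defs.rad dm dc (that i)).
pose F i := final_assign dm dc c that pick ord i.
have hF : forall i, F i = if mv i then pick i else that i.
  by move=> i; rewrite /F /final_assign fa_eq (perm_mem hord) mem_enum.
have rge0 : forall t : 'I_(size s), 0 <= Defs.rad dm dc t.
  by move=> t; exact: bigmax_ge_id.
have Lloc : forall (t : 'I_(size s)) l j, l \in Chat t -> j \in Chat t ->
    dc (inl l) (inr (xc t)) + dm l j <= Defs.rad dm dc t.
  move=> t l j hl hj.
  have h1 : dm l j <= \big[Num.max/0]_(j0 in Chat t) dm l j0.
    by apply: le_bigmax_cond.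
  have h2 : loss dm dc (Chat t) (xc t) l <= Defs.rad dm dc t.
    by rewrite /Defs.rad /cost; apply: le_bigmax_cond.
  rewrite /loss in h2; lra.
have G : forall j (u : 'I_(size s)), F j = u -> forall l, l \in Chat u ->
    dc (inl l) (inr (xc u)) + dm l j <= c * Defs.rad dm dc u.
  move=> j u; rewrite hF /mv; case: ifP => [/andP [hV _]|_] <- l hl.
  - have [hin _] := hpick j hV.
    by move: hin; rewrite inE => /forall_inP; apply.
  - have := Lloc _ _ _ hl (hthat j); have := rge0 (that j); nra.
have ne : forall t : 'I_(size s), Chat t != set0.
  by move=> t; rewrite hC; exact: (p1_ne thr0 hrun d t (ltn_ord t)).
have Bound : forall i, out_loss dm dc c that pick ord i <=
    (if mv i then Phi dm dc c i (pick i) else c * Defs.rad dm dc (that i)).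
  move=> i.
  change (loss dm dc (out_cluster dm dc c that pick ord (F i)) (xc (F i)) i <=
    (if mv i then Phi dm dc c i (pick i) else c * Defs.rad dm dc (that i))).
  set B := (if mv i then _ else _).
  suff hj : forall j, F j = F i -> dm i j + dc (inl i) (inr (xc (F i))) <= B.
    rewrite /loss.
    have : \big[Num.max/0]_(j in out_cluster dm dc c that pick ord (F i)) dm i j
        <= B - dc (inl i) (inr (xc (F i))).
      apply: bigmax_le.
        by have := hj i erefl; rewrite dm0; lra.
      by move=> j; rewrite /out_cluster inE => /eqP hj'; have := hj j hj'; lra.
    lra.
  move=> j hj; rewrite /B.
  case hmi : (mv i); move: hj; rewrite (hF i) hmi /= => hj.
  - set lst := [seq dm i j0 - dc (inl j0) (inr (xc (pick i))) | j0 <- enum (Chat (pick i))].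
    have hne : lst != [::].
      by rewrite -size_eq0 size_map -cardE -lt0n card_gt0 ne.
    have := minR_mem hne; case/mapP => l0; rewrite mem_enum => hl0 eqmin.
    rewrite /Phi -/lst eqmin.
    have := G j (pick i) hj l0 hl0; have := dmT i l0 j; lra.
  - have := G j (that i) hj i (hthat i); lra.
have L1 : forall i, out_loss dm dc c that pick ord i <= c * Defs.rad dm dc (that i).
  move=> i; have := Bound i; rewrite /mv; case: ifP => // /andP [_ h] hl.
  exact: le_trans hl (ltW h).
have L2 : forall i t, t \in Vset dm dc c s i ->
    out_loss dm dc c that pick ord i <= Phi dm dc c i t.
  move=> i t ht.
  have hV : Vset dm dc c s i != set0 by apply/set0Pn; exists t.
  have [hin hmin] := hpick i hV.
  have := Bound i; rewrite /mv hV /=; case: ifP => h hl.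
  - exact: le_trans hl (hmin t ht).
  - apply: le_trans hl _; apply: le_trans (hmin t ht); by rewrite leNgt h.
rewrite /in_core => -[S [y [hS hlt]]].
have S0 : (0 < #|S|)%N by rewrite -(ltr0n R); exact: lt_le_trans thr0 hS.
case/card_gt0P: S0 => i1 i1S.
case: (@arg_minnP _ i1 (fun i => i \in S) (fun i => nat_of_ord (that i)) i1S)
  => i0 i0S hmin.
set t := that i0.
have i0C : i0 \in Chat t := hthat i0.
have hr : Defs.rad dm dc t <= alpha * cost dm dc S y.
  rewrite /Defs.rad hC hX.
  apply: (p1_cost hrun d t S y (ltn_ord t) (subsetT S) hS).
  move=> i iS t' lt.
  have hi := hthat i; rewrite hC in hi.
  apply: (p1_disj hrun d (that i) t' i _ (ltn_ord _) hi).
  exact: leq_trans lt (hmin i iS).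
have lge0 : forall i, 0 <= loss dm dc S y i.
  move=> i; rewrite /loss; have := dcge0 (inl i) (inr y).
  have : 0 <= \big[Num.max/0]_(j in S) dm i j by exact: bigmax_ge_id.
  lra.
case: (@eq_bigmax _ _ _ 0 i0 (fun i => i \in S) (loss dm dc S y) i0S
   (fun i _ => lge0 i)) => istar istarS hcost.
have istarS' : istar \in S := istarS.
have hcost' : cost dm dc S y = loss dm dc S y istar := hcost.
set a := loss dm dc S y i0.
set L := loss dm dc S y istar.
have h1 : b * a < c * Defs.rad dm dc t := lt_le_trans (hlt i0 i0S) (L1 i0).
have ha := @arith_1 R b c a _ b0 E1 h1.
have hSa : forall i j, j \in S ->
    dm i j + dc (inl i) (inr y) <= loss dm dc S y i.
  move=> i j jS; rewrite /loss.
  have : dm i j <= \big[Num.max/0]_(j0 in S) dm i j0 by apply: le_bigmax_cond.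
  lra.
have htV : t \in Vset dm dc c s istar.
  rewrite inE; apply/forall_inP => j jC.
  have := Lloc t j i0 jC i0C; have := dmT j i0 istar.
  have := hSa i0 istar istarS'; have := dcge0 (inl i0) (inr y).
  have := rge0 t; rewrite -/a; lra.
have h2 : b * L < L + a + c * Defs.rad dm dc t.
  apply: lt_le_trans (hlt istar istarS') _.
  apply: le_trans (L2 istar t htV) _.
  rewrite /Phi.
  have hm : minR [seq dm istar j0 - dc (inl j0) (inr (xc t)) | j0 <- enum (Chat t)]
      <= dm istar i0 - dc (inl i0) (inr (xc t)).
    apply: minR_le; apply/mapP; exists i0 => //; by rewrite mem_enum.
  have := dcT (inl istar) (inr y) (inr (xc t)).
  have := dcT (inr y) (inl i0) (inr (xc t)).
  have := dcS (inr y) (inl i0).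
  have := hSa istar i0 i0S; have := hSa i0 i0 i0S; rewrite dm0 -/a -/L.
  lra.
have h3 : Defs.rad dm dc t <= alpha * L by rewrite /L -hcost'.
exact: (@arith_2 R alpha b c a _ L b0 c1 E2 h1 h2 h3).
Qed.
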